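(* If $x,y\in X$ are distinct and form an asymptotic pair for $T$ (i.e. $\lim_{n\to\infty}d(T^n(x),T^n(y))=0$), then $\deg(x)$ and $\deg(y)$ are both finite and $|\deg(x)-\deg(y)|\leq1$. In particular, no point $x\neq p$ is asymptotic to $p=(v_{0,0},v_{1,0},v_{2,0},\ldots)$.
   Context: Paths and cycles: a graph is $G=(V,E)$ with $V$ finite and $E\subset V\times V$. A path is a finite sequence of vertices $(u_0,\dots,u_L)$ with $(u_j,u_{j+1})\in E$; its length is $|\cdot|=L$; a cycle is a path with $u_0=u_L$. For paths where one ends where the next starts, $+$ denotes concatenation and $a\,c$ means the cycle $c$ traversed $a$ times. Construction: $G_0=(V_0,E_0)$ with $V_0=\{v_{0,0}\}$, $E_0=\{e_{0,0}\}$, $e_{0,0}=(v_{0,0},v_{0,0})$. For $n\geq1$, $G_n=(V_n,E_n)$ consists of a vertex $v_{n,0}$, the loop $e_{n,0}=(v_{n,0},v_{n,0})$, and $n$ cycles $c_{n,1},\dots,c_{n,n}$, each starting and ending at $v_{n,0}$, whose vertices other than $v_{n,0}$ are pairwise distinct (within each cycle and across cycles); $V_n$ is the set of all these vertices and $E_n$ consists of $e_{n,0}$ and the edges of the cycles. The maps $\varphi_n\colon V_{n+1}\to V_n$ and the lengths of the cycles $c_{n+1,i}$ are defined together: $\varphi_n(v_{n+1,0})=v_{n,0}$, and for each $i$ a path $P_{n,i}$ in $G_n$ from $v_{n,0}$ to $v_{n,0}$ is given; $c_{n+1,i}$ has length $|P_{n,i}|$ and $\varphi_n$ maps its $j$-th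 vertex to the $j$-th vertex of $P_{n,i}$ (written $\varphi_n(c_{n+1,i})=P_{n,i}$). The paths are: $P_{0,1}=10\,e_{0,0}$; for $n\geq1$: $P_{n,i}=e_{n,0}+2c_{n,i}+2c_{n,i+1}+\dots+2c_{n,n}+e_{n,0}$ for $2\leq i\leq n$; $P_{n,n+1}=(n+2)^2\big(\sum_{i=1}^n|c_{n,i}|\big)\,e_{n,0}$; and $P_{n,1}=(1\,e_{n,0}+2c_{n,1})+(2\,e_{n,0}+2c_{n,1})+\dots+(k_n\,e_{n,0}+2c_{n,1})+e_{n,0}+2c_{n,2}+\dots+2c_{n,n}+e_{n,0}$, where $k_n=2\big(1+\sum_{i=1}^n|c_{n,i}|\big)$. Let $X=\{x\in\prod_{n\geq0}V_n:\varphi_n(x_{n+1})=x_n\ \forall n\}$ with metric $d(x,y)=2^{-\min\{i:x_i\neq y_i\}}$ ($d(x,x)=0$); $X$ is a compact zero-dimensional metric space, and $T\colon X\to X$ defined by $T(x)=y$ iff $(x_n,y_n)\in E_n$ for all $n$ is a well-defined homeomorphism. Write $x_n$ for the $n$-th coordinate of $x$. Degree: for $v\in V_n$, $\deg(v)=+\infty$ if $v=v_{n,0}$ and $\deg(v)=i$ if $v$ is a vertex of $c_{n,i}$ different from $v_{n,0}$; for $x\in X$, $\deg(x)=\min_n\deg(x_n)$. *)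

(* Defs.v *)
From mathcomp Require Import all_boot.
From Stdlib Require Import ClassicalEpsilon.
Set Implicit Arguments. Unset Strict Implicit. Unset Printing Implicit Defensive.

(* Vertices of G_n are encoded as pairs of naturals:
   (0,0) is the centre v_{n,0};  (i,j) with 1 <= i <= n, 1 <= j < |c_{n,i}|
   is the j-th vertex of the cycle c_{n,i} (the cycle is
   (v_{n,0}, (i,1), ..., (i,|c_{n,i}|-1), v_{n,0})). *)
Definition vtx := (nat * nat)%type.
Definition center : vtx := (0, 0).

(* A path in G_n starting at v_{n,0} is encoded by the list of its vertices
   after the first one (u_1, ..., u_L); all paths used start at v_{n,0}, and
   all pieces start and end at v_{n,0}, so concatenation is list append. *)

Definition loopP (a : nat) : seq vtx := nseq a center.
(* one traversal of c_{n,i}, where L gives the cycle lengths at level n *)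
Definition cycle_tail (L : nat -> nat) (i : nat) : seq vtx :=
  [seq (i, j) | j <- iota 1 (L i).-1] ++ [:: center].
Definition cycP (L : nat -> nat) (i a : nat) : seq vtx :=
  flatten (nseq a (cycle_tail L i)).

Definition sumL (L : nat -> nat) (n : nat) : nat := \sum_(1 <= k < n.+1) L k.

(* The path P_{n,i} (tail), given the cycle lengths L of level n. *)
Definition ptail (n i : nat) (L : nat -> nat) : seq vtx :=
  if n == 0 then (if i == 1 then loopP 10 else [::])
  else if i == n.+1 then loopP ((n + 2) ^ 2 * sumL L n)
  else if i == 1 then
    flatten [seq loopP m ++ cycP L 1 2 | m <- iota 1 (2 * (1 + sumL L n))]
    ++ loopP 1 ++ flatten [seq cycP L k 2 | k <- iota 2 (n - 1)] ++ loopP 1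
  else if (2 <= i) && (i <= n) then
    loopP 1 ++ flatten [seq cycP L k 2 | k <- iota i (n - i + 1)] ++ loopP 1
  else [::].

(* len n i = |c_{n,i}| (meaningful for 1 <= i <= n); |c_{n+1,i}| = |P_{n,i}| *)
Fixpoint len (n : nat) : nat -> nat :=
  match n with
  | 0 => fun _ => 0
  | m.+1 => fun i => size (ptail m i (len m))
  end.

Definition Ppath (n i : nat) : seq vtx := center :: ptail n i (len n).

Definition inV (n : nat) (v : vtx) : bool :=
  (v == center) || [&& 1 <= v.1, v.1 <= n, 1 <= v.2 & v.2 < len n v.1].

Definition cv (n i j : nat) : vtx :=
  if (j == 0) || (j == len n i) then center else (i, j).

Definition edge (n : nat) (u w : vtx) : Prop :=
  (u = center /\ w = center) \/
  exists i j, [/\ 1 <= i <= n, j < len n i, u = cv n i j & w = cv n i j.+1].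

(* phi_n : V_{n+1} -> V_n ; the j-th vertex of c_{n+1,i} goes to the j-th
   vertex of P_{n,i} *)
Definition phi (n : nat) (v : vtx) : vtx :=
  if v == center then center else nth center (Ppath n v.1) v.2.

Definition pt := nat -> vtx.
Definition inX (x : pt) : Prop :=
  (forall n, inV n (x n)) /\ (forall n, phi n (x n.+1) = x n).

Definition Trel (x y : pt) : Prop := forall n, edge n (x n) (y n).
Definition T (x : pt) : pt :=
  epsilon (inhabits x) (fun y => inX y /\ Trel x y).

(* lim_m d(T^m x, T^m y) = 0 with d(x,y) = 2^{-min{i : x_i <> y_i}}:
   d(u,v) < 2^{-k} iff u_i = v_i for all i <= k. *)
Definition asymptotic (x y : pt) : Prop :=
  forall k, exists N, forall m, N <= m ->
    forall i, i <= k -> iter m T x i = iter m T y i.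

(* degree; None stands for +infinity *)
Definition vdeg (v : vtx) : option nat :=
  if v == center then None else Some v.1.
Definition ole (a b : option nat) : Prop :=
  match b, a with
  | None, _ => True
  | Some _, None => False
  | Some b', Some a' => a' <= b'
  end.
Definition is_min_deg (x : pt) (d : option nat) : Prop :=
  (forall n, ole d (vdeg (x n))) /\ (exists n, vdeg (x n) = d).
Definition deg (x : pt) : option nat :=
  epsilon (inhabits None) (is_min_deg x).

Definition pt_p : pt := fun _ => center.

(* Main.v *)
Require Import Defs.
From mathcomp Require Import all_boot zify.
From Stdlib Require Import ClassicalEpsilon FunctionalExtensionality Lia.
Set Implicit Arguments. Unset Strict Implicit. Unset Printing Implicit Defensive.

Lemma cv_cases n i j : cv n i j = center \/ cv n i j = (i,j).
Proof. rewrite /cv; case: ifP => _; [left|right]; done. Qed.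

Lemma cv_nc n i j : cv n i j <> center -> cv n i j = (i,j).
Proof. by case: (cv_cases n i j). Qed.

Lemma cv_mid n i j : 0 < j -> j != len n i -> cv n i j = (i,j).
Proof. rewrite /cv => h1 h2. have h3 : (j == 0) = false by lia. by rewrite h3 (negbTE h2). Qed.

Lemma edge_forced n u w : edge n u w -> u <> center -> w = cv n u.1 u.2.+1.
Proof.
case=> [[-> _] //|[i [j [_ _ Hu Hw]]]] Hnc.
move: Hnc; rewrite Hu => Hnc. by rewrite (cv_nc Hnc) /=.
Qed.

Lemma edge_center n w : edge n center w -> w = center \/ exists i, w = cv n i 1.
Proof.
case=> [[_ ->]|[i [j [_ Hj Hu Hw]]]]; first by left.
right; exists i; rewrite Hw.
suff -> : j = 0 by [].
move: Hu; rewrite /cv; case: ifP => [/orP [/eqP //| /eqP e]|_ [_ ->]] //.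
by rewrite e ltnn in Hj.
Qed.

Lemma size_ct L k : size (cycle_tail L k) = (L k).-1.+1.
Proof. by rewrite /cycle_tail size_cat size_map size_iota addn1. Qed.

Lemma size_cycP2 L k : size (cycP L k 2) = ((L k).-1.+1).*2.
Proof. rewrite /cycP /= cats0 size_cat size_ct; lia. Qed.

Lemma sumL_ge L n : 1 <= n -> L 1 <= sumL L n.
Proof. move=> hn; rewrite /sumL big_ltn //; lia. Qed.

Lemma len_ge3 n i : 1 <= i <= n -> 3 <= len n i.
Proof.
elim: n i => [|m IH] i /andP [h1 h2]; first by lia.
rewrite /= /ptail.
have [m0|m0] := eqVneq m 0.
  subst m. have ei : i = 1 by clear IH; lia.
  by rewrite ei.
have [ei|im] := eqVneq i m.+1.
  rewrite size_nseq. have hm : 1 <= m by lia.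
  have h3 := IH 1 (ltac:(lia)). have h4 := sumL_ge (len m) hm.
  have e : (m + 2) ^ 2 = (m+2)*(m+2) by rewrite expnS expn1.
  rewrite e. nia.
have [e1|i1] := eqVneq i 1.
  set s := sumL _ _.
  have -> : 2 * (1 + s) = (1 + 2 * s).+1 by lia.
  rewrite /= !size_cat /=. lia.
have -> : (2 <= i) && (i <= m) by lia.
have -> : m - i + 1 = (m - i).+1 by lia.
rewrite /= !size_cat /=. lia.
Qed.

Fixpoint ppath (e : vtx -> vtx -> Prop) (x : vtx) (l : seq vtx) : Prop :=
  if l is y :: l' then e x y /\ ppath e y l' else True.

Lemma ppath_cat e x l1 l2 :
  ppath e x l1 -> ppath e (last x l1) l2 -> ppath e x (l1 ++ l2).
Proof. elim: l1 x => [|y l IH] x //= [h1 h2] h3. split => //. exact: IH. Qed.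

Lemma ppath_nth e x l j : ppath e x l -> j < size l ->
  e (nth center (x :: l) j) (nth center l j).
Proof.
elim: l x j => [|y l IH] x j //=.
case: j => [|j] /= [h1 h2] hj //.
exact: (IH y j h2 hj).
Qed.

Definition good n l :=
  [/\ ppath (edge n) center l, last center l = center & all (inV n) l].

Lemma good_nil n : good n [::].
Proof. by []. Qed.

Lemma good_c n : good n [:: center].
Proof. split => /=. split=> //; by left. by []. by []. Qed.

Lemma good_cat n l1 l2 : good n l1 -> good n l2 -> good n (l1 ++ l2).
Proof.
case=> p1 e1 a1 [p2 e2 a2]; split.
- apply: ppath_cat => //; by rewrite e1.
- by rewrite last_cat e1.
- by rewrite all_cat a1 a2.
Qed.

Lemma good_flatten n (bs : seq (seq vtx)) :
  (forall b, b \in bs -> good n b) -> good n (flatten bs).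
Proof.
elim: bs => [|b bs IH] H /=; first exact: good_nil.
apply: good_cat; first by apply H; exact: mem_head.
apply IH => c hc; apply H; by rewrite in_cons hc orbT.
Qed.

Lemma good_loop n m : good n (loopP m).
Proof.
elim: m => [|m IH]; first exact: good_nil.
have -> : loopP m.+1 = [:: center] ++ loopP m by [].
exact: good_cat (good_c n) IH.
Qed.

Lemma ppath_cv n k m r : 1 <= k <= n -> m + r <= len n k ->
  ppath (edge n) (cv n k m) (map (cv n k) (iota m.+1 r)).
Proof.
move=> hk; elim: r m => [|r IH] m hr //=.
split; last by apply: IH; lia.
right; exists k, m; split => //; lia.
Qed.

Lemma ct_eq n k : 1 <= len n k ->
  cycle_tail (len n) k = map (cv n k) (iota 1 (len n k)).
Proof.
move=> hL; rewrite /cycle_tail.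
have e : iota 1 (len n k) = iota 1 (len n k).-1 ++ [:: len n k].
  move: (len n k) hL => [|L] // _. have -> : L.+1 = L + 1 by lia.
  by rewrite iotaD add1n addn1.
rewrite e map_cat.
congr (_ ++ _).
- apply/eq_in_map => j; rewrite mem_iota => hj. rewrite cv_mid //; lia.
- by rewrite /= /cv eqxx orbT.
Qed.

Lemma good_ct n k : 1 <= k <= n -> good n (cycle_tail (len n) k).
Proof.
move=> hk; have h3 := len_ge3 hk; split.
- rewrite ct_eq; last lia.
  have -> : center = cv n k 0 by rewrite /cv eqxx.
  apply: ppath_cv => //; lia.
- by rewrite /cycle_tail last_cat.
- rewrite /cycle_tail all_cat; apply/andP; split; last by [].
  apply/allP => v /mapP [j hj ->]; rewrite mem_iota in hj.
  rewrite /inV /=; apply/orP; right; apply/and4P; split; lia.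
Qed.

Lemma good_cycP n k c : 1 <= k <= n -> good n (cycP (len n) k c).
Proof.
move=> hk; apply: good_flatten => b; rewrite mem_nseq => /andP [_ /eqP ->].
exact: good_ct.
Qed.

Lemma good_ptail n i : good n (ptail n i (len n)).
Proof.
rewrite /ptail.
have [n0|n0] := eqVneq n 0.
  by case: ifP => _; [exact: good_loop | exact: good_nil].
have [ei|im] := eqVneq i n.+1; first exact: good_loop.
have [e1|i1] := eqVneq i 1.
  apply: good_cat.
    apply: good_flatten => b /mapP [m _ ->].
    apply: good_cat; [exact: good_loop | apply: good_cycP; lia].
  apply: good_cat; first exact: good_loop.
  apply: good_cat; last exact: good_loop.
  apply: good_flatten => b /mapP [k hk ->]; rewrite mem_iota in hk.
  apply: good_cycP; lia.
case: ifP => h; last exact: good_nil.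
apply: good_cat; first exact: good_loop.
apply: good_cat; last exact: good_loop.
apply: good_flatten => b /mapP [k hk ->]; rewrite mem_iota in hk.
apply: good_cycP; lia.
Qed.

Lemma mem_loop v m : v \in loopP m -> v = center.
Proof. by rewrite /loopP mem_nseq => /andP [_ /eqP]. Qed.

Lemma mem_cycP L k c v : v \in cycP L k c -> v = center \/ v.1 = k.
Proof.
rewrite /cycP => /flattenP [s]; rewrite mem_nseq => /andP [_ /eqP ->].
rewrite /cycle_tail mem_cat => /orP [/mapP [j _ ->]|]; first by right.
by rewrite mem_seq1 => /eqP ->; left.
Qed.

Lemma mem_F L i r v : v \in flatten [seq cycP L k 2 | k <- iota i r] ->
  v = center \/ i <= v.1.
Proof.
move=> /flattenP [t] /mapP [k hk ->] /mem_cycP [->|->]; first by left.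
right; rewrite mem_iota in hk; lia.
Qed.

Lemma mem_A L K v : v \in flatten [seq loopP m ++ cycP L 1 2 | m <- iota 1 K] ->
  v = center \/ 1 <= v.1.
Proof.
move=> /flattenP [t] /mapP [k hk ->]; rewrite mem_cat => /orP [/mem_loop ->|/mem_cycP [->|->]];
  by [left|left|right].
Qed.

Lemma mem_cat3 (v : vtx) a b c : v \in a ++ b ++ c -> [\/ v \in a, v \in b | v \in c].
Proof. rewrite mem_cat => /orP [h|]; first by constructor 1.
rewrite mem_cat => /orP [h|h]; by [constructor 2|constructor 3]. Qed.

Lemma mem_cat4 (v : vtx) a b c d : v \in a ++ b ++ c ++ d ->
  [\/ v \in a, v \in b, v \in c | v \in d].
Proof. rewrite mem_cat => /orP [h|/mem_cat3 [h|h|h]];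
  by [constructor 1|constructor 2|constructor 3|constructor 4]. Qed.

Lemma ptail_sub n i L v : v \in ptail n i L -> v = center \/ i <= v.1.
Proof.
rewrite /ptail.
have [n0|n0] := eqVneq n 0.
  by case: ifP => _ // /mem_loop ->; left.
have [ei|im] := eqVneq i n.+1; first by move=> /mem_loop ->; left.
have [e1|i1] := eqVneq i 1.
  subst i; case/mem_cat4 => H.
  - exact: mem_A H.
  - by rewrite (mem_loop H); left.
  - by case: (mem_F H) => [->|hh]; [left|right; lia].
  - by rewrite (mem_loop H); left.
case: ifP => h //.
case/mem_cat3 => H.
- by rewrite (mem_loop H); left.
- exact: mem_F H.
- by rewrite (mem_loop H); left.
Qed.

Lemma cycP_head L k : 2 <= L k -> exists s, cycP L k 2 = (k,1) :: s.
Proof.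
move=> h; have [L' e] : exists L', (L k).-1 = L'.+1 by exists (L k).-2; lia.
rewrite /cycP /cycle_tail e /=. by eexists.
Qed.

Lemma good_F n i r : 1 <= i -> i + r <= n.+1 ->
  good n (flatten [seq cycP (len n) k 2 | k <- iota i r]).
Proof.
move=> h1 h2; apply: good_flatten => b /mapP [k hk ->]; rewrite mem_iota in hk.
apply: good_cycP; lia.
Qed.

Lemma good_A n K : 1 <= n ->
  good n (flatten [seq loopP m ++ cycP (len n) 1 2 | m <- iota 1 K]).
Proof.
move=> hn; apply: good_flatten => b /mapP [m _ ->].
apply: good_cat; [exact: good_loop | apply: good_cycP; lia].
Qed.

Lemma nth_end X : last center X = center ->
  nth center (center :: (X ++ [:: center])) (size (X ++ [:: center])).-1 = center.
Proof.
move=> hX; rewrite size_cat addn1 /= -cat_cons nth_cat /= ltnSn.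
have := nth_last center (center :: X); rewrite /= => ->; exact: hX.
Qed.

Lemma ptail_end n i :
  nth center (center :: ptail n i (len n)) (size (ptail n i (len n))).-1 = center.
Proof.
have hl : forall m j, nth center (center :: loopP m) j = center.
  move=> m j; have -> : center :: loopP m = nseq m.+1 center by [].
  by rewrite nth_nseq; case: ifP.
rewrite /ptail.
have [n0|n0] := eqVneq n 0.
  by case: ifP => _; [exact: hl|].
have [ei|im] := eqVneq i n.+1; first exact: hl.
have [e1|i1] := eqVneq i 1.
  rewrite !catA; apply: nth_end.
  have := good_cat (good_cat (good_A (n:=n) (2 * (1 + sumL (len n) n)) (ltac:(lia))) (good_loop n 1))
    (good_F (n:=n) (i:=2) (r:=n-1) (ltac:(lia)) (ltac:(lia))).
  by case.
case: ifP => h //.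
rewrite catA; apply: nth_end.
have := good_cat (good_loop n 1) (good_F (n:=n) (i:=i) (r:=n - i + 1) (ltac:(lia)) (ltac:(lia))).
by case.
Qed.

Lemma ptail_first n i : nth center (ptail n i (len n)) 0 = center.
Proof.
rewrite /ptail.
have [n0|n0] := eqVneq n 0.
  by case: ifP => _ //; rewrite nth_nseq.
have [ei|im] := eqVneq i n.+1; first by rewrite nth_nseq; case: ifP.
have [e1|i1] := eqVneq i 1.
  set s := sumL _ _.
  by have -> : 2 * (1 + s) = (1 + 2 * s).+1 by lia.
by case: ifP.
Qed.

Lemma ptail_D n k : 2 <= k <= n -> nth center (center :: ptail n k (len n)) 2 = (k,1).
Proof.
move=> hk.
have [s es] := cycP_head (L:=len n) (k:=k) (ltac:(have := len_ge3 (n:=n) (i:=k); lia)).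
rewrite /ptail.
have -> : (n == 0) = false by lia.
have -> : (k == n.+1) = false by lia.
have -> : (k == 1) = false by lia.
have -> : (2 <= k) && (k <= n) by lia.
have -> : n - k + 1 = (n - k).+1 by lia.
by rewrite /= es.
Qed.

Lemma ptail_split n a : 1 <= a < n -> exists A B,
  [/\ ptail n a (len n) = A ++ B, 2 <= size B, nth center B 0 = (a.+1,1)
    & all (fun v : vtx => v.1 != a) B].
Proof.
move=> ha.
have [s es] := cycP_head (L:=len n) (k:=a.+1) (ltac:(have := len_ge3 (n:=n) (i:=a.+1); lia)).
have hB : forall r, all (fun v : vtx => v.1 != a)
    (flatten [seq cycP (len n) k 2 | k <- iota a.+1 r] ++ loopP 1).
  move=> r; apply/allP => v; rewrite mem_cat => /orP [|/mem_loop ->]; last by rewrite /=; lia.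
  move=> /flattenP [t /mapP [k hk ->]] /mem_cycP [->|->]; rewrite /=; first lia.
  rewrite mem_iota in hk; lia.
rewrite /ptail.
have -> : (n == 0) = false by lia.
have -> : (a == n.+1) = false by lia.
have [e1|a1] := eqVneq a 1.
  subst a.
  exists (flatten [seq loopP m ++ cycP (len n) 1 2 | m <- iota 1 (2 * (1 + sumL (len n) n))] ++ loopP 1).
  exists (flatten [seq cycP (len n) k 2 | k <- iota 2 (n - 1)] ++ loopP 1).
  have -> : n - 1 = (n - 2).+1 by lia.
  split.
  - by rewrite !catA.
  - by rewrite /= es size_cat /=; lia.
  - by rewrite /= es.
  - exact: hB.
have -> : (2 <= a) && (a <= n) by lia.
have -> : n - a + 1 = (n - a).+1 by lia.
exists (loopP 1 ++ cycP (len n) a 2).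
exists (flatten [seq cycP (len n) k 2 | k <- iota a.+1 (n - a)] ++ loopP 1).
have -> : n - a = (n - a.+1).+1 by lia.
split.
- by rewrite /= !catA.
- by rewrite /= es size_cat /=; lia.
- by rewrite /= es.
- exact: hB.
Qed.

Lemma lenS n i : len n.+1 i = size (ptail n i (len n)).
Proof. by []. Qed.

Lemma phi_nc n v : v != center -> phi n v = nth center (Ppath n v.1) v.2.
Proof. by rewrite /phi => /negbTE ->. Qed.

Lemma phi_c n : phi n center = center.
Proof. by rewrite /phi eqxx. Qed.

Lemma last_ptail n i : last center (ptail n i (len n)) = center.
Proof. by case: (good_ptail n i). Qed.

Lemma phi_cv n i j : 1 <= i -> j <= len n.+1 i ->
  phi n (cv n.+1 i j) = nth center (Ppath n i) j.
Proof.
move=> hi hj; rewrite /cv; case: ifP => h.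
  rewrite phi_c; case/orP: h => /eqP ->; first by [].
  rewrite lenS /Ppath.
  have := nth_last center (center :: ptail n i (len n)); rewrite /= => ->.
  by rewrite last_ptail.
rewrite phi_nc //; apply/eqP => -[]; lia.
Qed.

Lemma PathE n i j : j < len n.+1 i ->
  edge n (nth center (Ppath n i) j) (nth center (Ppath n i) j.+1).
Proof.
move=> hj; case: (good_ptail n i) => hp _ _.
exact: (ppath_nth hp hj).
Qed.

Lemma Ppath_V n i v : v \in Ppath n i -> inV n v.
Proof.
rewrite in_cons => /orP [/eqP ->|h]; first by rewrite /inV eqxx.
case: (good_ptail n i) => _ _ /allP; exact.
Qed.

Lemma inV_nc n v : inV n v -> v != center ->
  [/\ 1 <= v.1, v.1 <= n, 1 <= v.2 & v.2 < len n v.1].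
Proof. by rewrite /inV => /orP [/eqP ->|/and4P [a b c d]] //; rewrite eqxx. Qed.

Lemma phi_edge n a b : edge n.+1 a b -> edge n (phi n a) (phi n b).
Proof.
case=> [[-> ->]|[i [j [hi hj -> ->]]]]; first by rewrite phi_c; left.
rewrite !phi_cv //; try lia.
exact: PathE.
Qed.

Lemma phi_V n v : inV n.+1 v -> inV n (phi n v).
Proof.
have [->|hv] := eqVneq v center; first by rewrite phi_c /inV eqxx.
move=> /inV_nc /(_ hv) [h1 h2 h3 h4].
rewrite phi_nc //; apply: Ppath_V; apply: mem_nth.
by rewrite /Ppath /= -lenS; lia.
Qed.

Definition succ n (v : vtx) : vtx :=
  if v == center then center else cv n v.1 v.2.+1.

Lemma succ_compat n v : inV n.+1 v -> v != center -> phi n v != center ->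
  phi n (succ n.+1 v) = succ n (phi n v).
Proof.
move=> hV hv hp; have [h1 h2 h3 h4] := inV_nc hV hv.
rewrite /succ (negbTE hv) (negbTE hp) phi_cv //.
have := PathE h4; rewrite -phi_nc // => he.
have := edge_forced he; rewrite phi_nc // => ->; first by [].
by apply/eqP; rewrite -phi_nc.
Qed.

Lemma succ_edge n v : inV n v -> v != center -> edge n v (succ n v).
Proof.
move=> hV hv; have [h1 h2 h3 h4] := inV_nc hV hv.
rewrite /succ (negbTE hv); right; exists v.1, v.2; split => //; first lia.
rewrite cv_mid; [by case: v {hV hv h1 h2 h3 h4} | lia | lia].
Qed.

Lemma succ_V n v : inV n v -> inV n (succ n v).
Proof.
have [->|hv] := eqVneq v center; first by rewrite /succ eqxx.
move=> hV; have [h1 h2 h3 h4] := inV_nc hV hv.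
rewrite /succ (negbTE hv) /cv; case: ifP => h; first by rewrite /inV eqxx.
rewrite /inV; apply/orP; right; apply/and4P; split => /=; lia.
Qed.

Fixpoint pd (n k : nat) (v : vtx) : vtx :=
  if k is k'.+1 then phi n (pd n.+1 k' v) else v.

Lemma pd_edge k n a b : edge (n + k) a b -> edge n (pd n k a) (pd n k b).
Proof.
elim: k n => [|k IH] n /=; first by rewrite addn0.
rewrite addnS -addSn => h; apply: phi_edge; exact: IH.
Qed.

Lemma pd_V k n a : inV (n + k) a -> inV n (pd n k a).
Proof.
elim: k n => [|k IH] n /=; first by rewrite addn0.
rewrite addnS -addSn => h; apply: phi_V; exact: IH.
Qed.

Lemma pd_z z k n : inX z -> pd n k (z (n + k)) = z n.
Proof.
case=> _ hz; elim: k n => [|k IH] n /=; first by rewrite addn0.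
by rewrite addnS -addSn IH hz.
Qed.

Lemma up_nc z n : inX z -> z n != center -> z n.+1 != center.
Proof.
case=> _ hz hn; apply/eqP => e; move: hn; by rewrite -hz e phi_c eqxx.
Qed.

Lemma inX_p : inX pt_p.
Proof. split => n; by rewrite /pt_p ?phi_c // /inV eqxx. Qed.

Lemma exists_succ z : inX z -> exists w, inX w /\ Trel z w.
Proof.
move=> hX.
case: (classic (exists N, z N != center)) => [[N hN]|hc].
  have hup : forall d, z (N + d) != center.
    elim=> [|d IH]; first by rewrite addn0.
    by rewrite addnS; apply: up_nc.
  pose W n := pd n (N - n) (succ (n + (N - n)) (z (n + (N - n)))).
  have hge : forall n, z (n + (N - n)) != center.
    move=> n; have -> : n + (N - n) = N + (n - N) by lia. exact: hup.
  exists W; split; first split.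
  - move=> n; apply: pd_V; apply: succ_V; exact: hX.1.
  - move=> n; have [le|lt] := leqP N n.
      rewrite /W.
      have -> : N - n = 0 by lia.
      have -> : N - n.+1 = 0 by lia.
      rewrite /= !addn0.
      have h1 : z n.+1 != center.
        have := hge n.+1; have -> : n.+1 + (N - n.+1) = n.+1 by lia. by [].
      have h0 : z n != center.
        have := hge n; have -> : n + (N - n) = n by lia. by [].
      rewrite succ_compat //; first by rewrite hX.2.
      + exact: hX.1.
      + by rewrite hX.2.
    rewrite /W.
    have -> : n + (N - n) = n.+1 + (N - n.+1) by lia.
    have -> : N - n = (N - n.+1).+1 by lia.
    by [].
  - move=> n; rewrite -(pd_z (N - n) n hX) /W.
    apply: pd_edge; apply: succ_edge; [exact: hX.1| exact: hge].
have -> : z = pt_p.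
  apply: functional_extensionality => n; rewrite /pt_p.
  by apply/eqP; apply: contraT => h; case: hc; exists n.
exists pt_p; split; first exact: inX_p.
by move=> n; left.
Qed.

Lemma pnc (i j : nat) : (0 < i) || (0 < j) -> (i,j) != center.
Proof. rewrite /center xpair_eqE; lia. Qed.

Lemma phi_pj n i j : 0 < j -> phi n (i,j) = nth center (Ppath n i) j.
Proof. move=> h; rewrite phi_nc //; apply: pnc; by rewrite h orbT. Qed.

Lemma phi_pi n i j : 0 < i -> phi n (i,j) = nth center (Ppath n i) j.
Proof. move=> h; rewrite phi_nc //; apply: pnc; by rewrite h. Qed.

Definition orb z t := iter t T z.

Lemma T_spec z : inX z -> inX (T z) /\ Trel z (T z).
Proof.
move=> h; rewrite /T.
exact: (epsilon_spec (inhabits z) (fun y => inX y /\ Trel z y) (exists_succ h)).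
Qed.

Lemma orb_X z t : inX z -> inX (orb z t).
Proof. move=> h; elim: t => [|t IH] //=. exact: (T_spec IH).1. Qed.

Lemma orb_T z t : inX z -> Trel (orb z t) (orb z t.+1).
Proof. move=> h; exact: (T_spec (orb_X t h)).2. Qed.

Lemma orb_step z t n : inX z -> orb z t n != center ->
  orb z t.+1 n = cv n (orb z t n).1 (orb z t n).2.+1.
Proof. move=> h hn; apply: edge_forced; [exact: orb_T h n | exact/eqP]. Qed.

Definition Q a (w : pt) := forall n, w n = center \/ a <= (w n).1.
Definition R a (w : pt) := exists n, w n != center /\ (w n).1 = a.

Lemma nth_nc_mem (l : seq vtx) k : nth center l k != center -> nth center l k \in l.
Proof.
case: (ltnP k (size l)) => h; first by move=> _; exact: mem_nth.
by rewrite nth_default // eqxx.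
Qed.

Lemma Q_inv a w w' : inX w -> inX w' -> Trel w w' -> Q a w -> Q a w'.
Proof.
move=> hX hX' hT hQ n.
have [e|hn'] := eqVneq (w' n) center; first by left.
right.
have [hw|hw] := eqVneq (w n) center; last first.
  have e := edge_forced (hT n) (elimN eqP hw).
  have e2 := e; rewrite e in hn'; rewrite e2 (cv_nc (elimN eqP hn')) /=.
  by case: (hQ n) => // h; rewrite h eqxx in hw.
have hw1' : w' n.+1 != center.
  apply/eqP => e; move: hn'; by rewrite -hX'.2 e phi_c eqxx.
have [hw1|hw1] := eqVneq (w n.+1) center.
  have := hT n.+1; rewrite hw1 => /edge_center [e|[i e]]; first by rewrite e eqxx in hw1'.
  rewrite e in hw1'; have e2 := cv_nc (elimN eqP hw1').
  move: hn'; rewrite -hX'.2 e e2 phi_pj //=.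
  by rewrite ptail_first eqxx.
have hu : a <= (w n.+1).1 by case: (hQ n.+1) => // h; rewrite h eqxx in hw1.
have e := edge_forced (hT n.+1) (elimN eqP hw1).
rewrite e in hw1'; have e2 := cv_nc (elimN eqP hw1').
have ew : w' n = nth center (ptail n (w n.+1).1 (len n)) (w n.+1).2.
  by rewrite -hX'.2 e e2 phi_pj.
rewrite ew in hn' *.
case: (ptail_sub (nth_nc_mem hn')) => [h|h]; first by rewrite h eqxx in hn'.
exact: leq_trans hu h.
Qed.

Lemma Up a w n : inX w -> Q a w -> w n != center -> (w n).1 = a ->
  w n.+1 != center /\ (w n.+1).1 = a.
Proof.
move=> hX hQ hn ha; have h1 := up_nc hX hn; split => //.
have hu : a <= (w n.+1).1 by case: (hQ n.+1) => // h; rewrite h eqxx in h1.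
move: hn ha; rewrite -hX.2 phi_nc // => hn ha.
have := nth_nc_mem hn; rewrite in_cons => /orP [/eqP e|hm].
  by rewrite e eqxx in hn.
case: (ptail_sub hm) => [e|h]; first by rewrite e eqxx in hn.
rewrite -ha in hu *; apply/eqP; by rewrite eqn_leq h hu.
Qed.

Lemma Up_all a w n : inX w -> Q a w -> w n != center -> (w n).1 = a ->
  forall d, w (n + d) != center /\ (w (n + d)).1 = a.
Proof.
move=> hX hQ hn ha; elim=> [|d [h1 h2]]; first by rewrite addn0.
rewrite addnS; exact: Up.
Qed.

Lemma R_inv a w w' : inX w -> inX w' -> Trel w w' -> Q a w -> R a w -> R a w'.
Proof.
move=> hX hX' hT hQ [n0 [hn ha]].
have [h1 h2] := Up hX hQ hn ha.
have e := edge_forced (hT n0.+1) (elimN eqP h1).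
rewrite h2 in e.
have [el|nl] := eqVneq (w n0.+1).2.+1 (len n0.+1 a).
  move: hn; rewrite -hX.2 phi_nc // h2.
  have -> : (w n0.+1).2 = (size (ptail n0 a (len n0))).-1 by rewrite -lenS -el.
  by rewrite /Ppath ptail_end eqxx.
exists n0.+1; rewrite e cv_mid //; split => //; apply: pnc; by rewrite orbT.
Qed.

Lemma Q_orb a z t : inX z -> Q a z -> Q a (orb z t).
Proof.
move=> hX hQ; elim: t => [|t IH] //.
exact: Q_inv (orb_X t hX) (orb_X t.+1 hX) (orb_T t hX) IH.
Qed.

Lemma R_orb a z t : inX z -> Q a z -> R a z -> R a (orb z t).
Proof.
move=> hX hQ hR; elim: t => [|t IH] //.
exact: R_inv (orb_X t hX) (orb_X t.+1 hX) (orb_T t hX) (Q_orb t hX hQ) IH.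
Qed.

Lemma walk w m i p : inX w -> 1 <= i -> w m = (i, p) ->
  forall s, p + s < len m i -> orb w s m = (i, p + s).
Proof.
move=> hX hi hw; elim=> [|s IH] hs; first by rewrite addn0.
rewrite orb_step //; last by rewrite IH; [apply/eqP => -[]; lia | lia].
rewrite IH /=; last lia.
rewrite cv_mid; [by rewrite addnS | lia | lia].
Qed.

Lemma step_down w t m k : inX w -> orb w t m.+1 = (k,1) -> 2 <= k <= m ->
  orb w t.+1 m = (k,1).
Proof.
move=> hX he hk.
have e : orb w t.+1 m.+1 = (k,2).
  rewrite orb_step // he /=; last by apply/eqP => -[]; lia.
  rewrite cv_mid //; have := len_ge3 (n:=m.+1) (i:=k); lia.
rewrite -(orb_X t.+1 hX).2 e phi_pj //=.
exact: ptail_D.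
Qed.

Lemma step_down_iter w k : inX w -> 2 <= k ->
  forall r t, orb w t (k + r) = (k,1) -> orb w (t + r) k = (k,1).
Proof.
move=> hX hk; elim=> [|r IH] t h; first by rewrite addn0 -h addn0.
rewrite addnS -addSn; apply: IH.
apply: step_down => //; first by rewrite -addnS.
lia.
Qed.

Lemma L2' a w : inX w -> Q a w -> R a w -> exists s, orb w s a.+1 != center.
Proof.
move=> hX hQ [n0 [hn ha]].
have [ha1 _ _ _] := inV_nc (hX.1 n0) hn. rewrite ha in ha1.
have hall := Up_all hX hQ hn ha.
set n := n0 + a.+1.
have [hu1 hu2] := hall a.+2.
rewrite -addSnnS -/n in hu1 hu2.
have [_ _ hp1 hp2] := inV_nc (hX.1 n.+1) hu1.
set p := (w n.+1).2 in hp1 hp2.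
have eu : w n.+1 = (a, p) by rewrite -hu2 /p; case: (w n.+1).
rewrite hu2 in hp2.
have [hn1 hn2] := hall a.+1. rewrite -/n in hn1 hn2.
have ephi : nth center (Ppath n a) p = w n by rewrite -hX.2 eu phi_pi.
have [A [B [eAB hB2 hB0 hBa]]] := ptail_split (n:=n) (a:=a) (ltac:(lia)).
have hpA : p <= size A.
  rewrite leqNgt; apply/negP => hlt.
  move: ephi; rewrite /Ppath eAB.
  have -> : p = (p.-1).+1 by lia.
  rewrite /= nth_cat.
  have -> : (p.-1 < size A) = false by lia.
  move=> e2. have hm : nth center B (p.-1 - size A) != center by rewrite e2.
  have := allP hBa _ (nth_nc_mem hm). by rewrite e2 hn2 eqxx.
have hlen : len n.+1 a = size A + size B by rewrite lenS eAB size_cat.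
have hw := walk hX ha1 eu (s := (size A).+1 - p) (ltac:(lia)).
have hq : p + ((size A).+1 - p) = (size A).+1 by lia.
rewrite hq in hw.
have hlev : orb w ((size A).+1 - p) n = (a.+1, 1).
  rewrite -(orb_X _ hX).2 hw phi_pi //= eAB nth_cat ltnn subnn.
  exact: hB0.
have := step_down_iter hX (k:=a.+1) (ltac:(lia)) (r := n - a.+1) (t := (size A).+1 - p).
have -> : a.+1 + (n - a.+1) = n by lia.
move=> /(_ hlev) e; exists ((size A).+1 - p + (n - a.+1)); by rewrite e.
Qed.

Lemma L2 a z : inX z -> Q a z -> R a z ->
  forall t0, exists t, t0 <= t /\ orb z t a.+1 != center.
Proof.
move=> hX hQ hR t0.
have [s hs] := L2' (orb_X t0 hX) (Q_orb t0 hX hQ) (R_orb t0 hX hQ hR).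
exists (s + t0); split; first lia.
by rewrite /orb iterD.
Qed.

Lemma Q_center b w m : inX w -> Q b w -> m < b -> w m = center.
Proof.
move=> hX hQ hm; apply/eqP; apply: contraT => hn.
have [_ h2 _ _] := inV_nc (hX.1 m) hn.
case: (hQ m) => [e|h]; first by rewrite e eqxx in hn.
lia.
Qed.

Lemma key a b x y : inX x -> inX y -> Q a x -> R a x -> Q b y -> a.+2 <= b ->
  asymptotic x y -> False.
Proof.
move=> hx hy hQa hRa hQb hab has.
have [N hN] := has a.+1.
have [t [ht hc]] := L2 hx hQa hRa N.
have e := hN t ht a.+1 (leqnn _).
have := Q_center (orb_X t hy) (Q_orb t hy hQb) (m := a.+1) (ltac:(lia)).
rewrite /orb -e => e2. by rewrite /orb e2 eqxx in hc.
Qed.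

Lemma asym_sym x y : asymptotic x y -> asymptotic y x.
Proof.
move=> h k; have [N hN] := h k; exists N => m hm i hi; by rewrite hN.
Qed.

Lemma Q_p b : Q b pt_p.
Proof. by move=> n; left. Qed.

Lemma R_min w a0 : R a0 w -> exists a, R a w /\ forall b, R b w -> a <= b.
Proof.
move=> h.
suff : forall k a0, a0 <= k -> R a0 w -> exists a, R a w /\ forall b, R b w -> a <= b.
  by move=> /(_ a0 a0 (leqnn _) h).
elim=> [|k IH] a1 hk ha1.
  exists a1; split => // b _; lia.
case: (classic (exists b, b < a1 /\ R b w)) => [[b [hb hbR]]|hno].
  apply: (IH b) => //; lia.
exists a1; split => // b hb; rewrite leqNgt; apply/negP => hlt.
by apply: hno; exists b.
Qed.

Lemma deg_spec w : inX w -> w <> pt_p -> exists a, deg w = Some a /\ Q a w /\ R a w.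
Proof.
move=> hX hp.
have [n0 hn0] : exists n, w n != center.
  apply: NNPP => hc; apply: hp; apply: functional_extensionality => n.
  rewrite /pt_p; apply/eqP; apply: contraT => h; case: hc; by exists n.
have [a [hRa hmin]] := R_min (w := w) (a0 := (w n0).1) (ltac:(by exists n0)).
have hex : exists d, is_min_deg w d.
  exists (Some a); split.
  - move=> n; rewrite /vdeg; case: ifP => //= /negbT h.
    apply: hmin; by exists n.
  - case: hRa => n [h1 h2]; exists n; by rewrite /vdeg (negbTE h1) h2.
have := epsilon_spec (inhabits None) (is_min_deg w) hex; rewrite -/(deg w).
case: (deg w) => [d|] [h1 [n h2]]; last first.
  by have := h1 n0; rewrite /vdeg (negbTE hn0).
exists d; split => //; split.
- move=> m; have := h1 m; rewrite /vdeg; case: ifP => [/eqP -> |_ /=]; by [left|right].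
- move: h2; rewrite /vdeg; case: ifP => // h [e]; exists n; by rewrite h e.
Qed.

Theorem corollary3p10 :
  (forall x y : pt, inX x -> inX y -> x <> y -> asymptotic x y ->
     exists a b : nat, deg x = Some a /\ deg y = Some b /\ a <= b.+1 /\ b <= a.+1)
  /\ (forall x : pt, inX x -> x <> pt_p -> ~ asymptotic x pt_p).
Proof.
split.
- move=> x y hx hy hxy has.
  case: (classic (x = pt_p)) => [ex|nx].
    have ny : y <> pt_p by move=> ey; apply: hxy; rewrite ex ey.
    have [b [_ [hQ hR]]] := deg_spec hy ny.
    exfalso; apply: (key (b := b.+2) hy inX_p hQ hR (Q_p _) (leqnn _)).
    by rewrite -ex; apply: asym_sym.
  case: (classic (y = pt_p)) => [ey|ny].
    have [a [_ [hQ hR]]] := deg_spec hx nx.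
    exfalso; apply: (key (b := a.+2) hx inX_p hQ hR (Q_p _) (leqnn _)).
    by rewrite -ey.
  have [a [da [hQa hRa]]] := deg_spec hx nx.
  have [b [db [hQb hRb]]] := deg_spec hy ny.
  exists a, b; split => //; split => //; split.
  + rewrite leqNgt; apply/negP => hlt.
    exact: (key hy hx hQb hRb hQa (ltac:(lia)) (asym_sym has)).
  + rewrite leqNgt; apply/negP => hlt.
    exact: (key hx hy hQa hRa hQb (ltac:(lia)) has).
- move=> x hx hxp has.
  have [a [_ [hQ hR]]] := deg_spec hx hxp.
  exact: (key (b := a.+2) hx inX_p hQ hR (Q_p _) (leqnn _) has).
Qed.
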